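(* Let $N\ge 1$ and $S_{<N/2}=\{x\in\{0,1\}^N : wt(x)<N/2\}$. There is a quantum algorithm that, for every $x\in S_{<N/2}$, identifies $x$ using a single parity-restricted query to the IP oracle for $x$.
   Context: $wt(\cdot)$ denotes Hamming weight. For $x\in\{0,1\}^N$, the IP (inner product) oracle is the unitary acting by $|\tilde q\rangle\mapsto(-1)^{\tilde q\cdot x}|\tilde q\rangle$ for $\tilde q\in\{0,1\}^N$, where $\tilde q\cdot x=\sum_i\tilde q_ix_i$. A query is parity-restricted if the query register is in a superposition only of strings $\tilde q$ with even Hamming weight $wt(\tilde q)$. *)

(* Defs.v *)
From HB Require Import structures.
From mathcomp Require Import all_boot all_order all_algebra all_field.
Set Implicit Arguments. Unset Strict Implicit. Unset Printing Implicit Defensive.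
Import Order.TTheory GRing.Theory Num.Theory.
Local Open Scope ring_scope.

Definition bitstr (N : nat) := {ffun 'I_N -> bool}.

Definition wt N (x : bitstr N) : nat := #|[pred i | x i]|.

(* q . x = sum_i q_i x_i (as a natural number; only its parity matters) *)
Definition dotb N (q x : bitstr N) : nat := #|[pred i | q i && x i]|.

(* Basis states of the full register: query register (q in {0,1}^N)
   tensored with a workspace of dimension m. *)
Definition reg N m := (bitstr N * 'I_m)%type.

Definition IP_query N m (x : bitstr N) (psi : reg N m -> algC) : reg N m -> algC :=
  fun t => (-1) ^+ dotb t.1 x * psi t.

Definition parity_restricted N m (psi : reg N m -> algC) : Prop :=
  forall t : reg N m, odd (wt t.1) -> psi t = 0.

Definition normalized (T : finType) (psi : T -> algC) : Prop :=
  \sum_(t : T) `|psi t| ^+ 2 = 1.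

Definition unitary (T : finType) (U : T -> T -> algC) : Prop :=
  forall a b : T, \sum_(c : T) (U c a)^* * U c b = (a == b)%:R.

Definition apply_op (T : finType) (U : T -> T -> algC) (psi : T -> algC) : T -> algC :=
  fun a => \sum_(b : T) U a b * psi b.

(* Main.v *)
Require Import Defs.
From mathcomp Require Import all_boot all_order all_algebra all_field.
From mathcomp Require Import ring zify.
Import Order.TTheory GRing.Theory Num.Theory.
Set Implicit Arguments. Unset Strict Implicit.
Local Open Scope ring_scope.

Definition compb N (x : bitstr N) : bitstr N := [ffun i => ~~ x i].

Lemma pow_card N (P : pred 'I_N) :
  (-1 : algC) ^+ #|[pred i | P i]| = \prod_i (-1) ^+ (P i).
Proof.
rewrite -sum1_card big_mkcond /= expr_sum; apply: eq_bigr => i _.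
by rewrite unfold_in; case: (P i).
Qed.

Lemma dot_prod N (q x : bitstr N) :
  (-1 : algC) ^+ dotb q x = \prod_i (-1) ^+ (q i && x i).
Proof.
rewrite /dotb -sum1_card big_mkcond /= expr_sum; apply: eq_bigr => i _.
by rewrite unfold_in; case: (q i && x i).
Qed.

Lemma wt_prod N (q : bitstr N) :
  (-1 : algC) ^+ wt q = \prod_i (-1) ^+ (q i).
Proof.
rewrite /wt -sum1_card big_mkcond /= expr_sum; apply: eq_bigr => i _.
by rewrite unfold_in; case: (q i).
Qed.

Lemma sum_prod N (F : 'I_N -> bool -> algC) :
  \sum_(q : bitstr N) \prod_i F i (q i) = \prod_i (F i true + F i false).
Proof.
transitivity (\prod_i \sum_j F i j); first by rewrite bigA_distr_bigA.
by apply: eq_bigr => i _; rewrite big_bool.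
Qed.

Lemma prod_eq N (a b : bitstr N) :
  \prod_i (1 + (-1 : algC) ^+ (a i) * (-1) ^+ (b i)) = 2 ^+ N * (a == b)%:R.
Proof.
case: eqVneq => [->|nab].
  rewrite mulr1 (eq_bigr (fun _ => 2)); last first.
    by move=> i _; case: (b i); rewrite /= ?expr1 ?expr0 ?mulrNN mulr1.
  by rewrite prodr_const card_ord.
have [i Hi] : exists i, a i != b i.
  apply/existsP; apply/negP => /forallP H; move/eqP: nab; apply.
  by apply/ffunP => i; exact/eqP/H.
rewrite mulr0 (bigD1 i) //=.
by move: Hi; case: (a i); case: (b i) => //= _; rewrite ?expr1 ?expr0 ?mulr1 ?mul1r subrr mul0r.
Qed.

Lemma dotbC N (q x : bitstr N) : dotb q x = dotb x q.
Proof. by rewrite /dotb; apply: eq_card => i; rewrite !inE andbC. Qed.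

Lemma core N (a b : bitstr N) (e : bool) :
  \sum_(q : bitstr N) (if e then (-1 : algC) ^+ wt q else 1) *
      ((-1) ^+ dotb q a * (-1) ^+ dotb q b)
  = 2 ^+ N * ((if e then compb a else a) == b)%:R.
Proof.
transitivity (\sum_(q : bitstr N) \prod_i ((if e then (-1 : algC) ^+ (q i) else 1) *
   ((-1) ^+ (q i && a i) * (-1) ^+ (q i && b i)))).
  apply: eq_bigr => q _; rewrite !dot_prod.
  case: e => /=; first by rewrite wt_prod -!big_split.
  by rewrite mul1r -big_split; apply: eq_bigr => i _; rewrite mul1r.
rewrite (@sum_prod N (fun i c => (if e then (-1) ^+ c else 1) * ((-1) ^+ (c && a i) * (-1) ^+ (c && b i)))) -prod_eq; apply: eq_bigr => i _.
case: e; rewrite ?ffunE; case: (a i); case: (b i);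
  rewrite /= ?expr1 ?expr0; ring.
Qed.


Lemma compbK N (x : bitstr N) : compb (compb x) = x.
Proof. by apply/ffunP => i; rewrite !ffunE negbK. Qed.

Lemma wt_compb N (x : bitstr N) : (wt x + wt (compb x))%N = N.
Proof.
rewrite -[in RHS](card_ord N) -(cardC [pred i | x i]) /wt; congr (_ + _)%N.
by apply: eq_card => i; rewrite !inE ffunE.
Qed.

Lemma compb_neq N (hN : (1 <= N)%N) (x : bitstr N) : compb x != x.
Proof.
apply/eqP => /ffunP/(_ (Ordinal hN)); rewrite ffunE; by case: (x _).
Qed.

Lemma sum_reg N (G : bitstr N -> algC) : \sum_(t : reg N 1) G t.1 = \sum_q G q.
Proof.
transitivity (\sum_(q : bitstr N) \sum_(w < 1) G q); first by rewrite pair_bigA.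
by apply: eq_bigr => q _; rewrite big_ord1.
Qed.

Lemma even_ind n : (~~ odd n)%:R = (1 + (-1 : algC) ^+ n) / 2.
Proof.
rewrite -signr_odd; case: (odd n) => /=; rewrite ?expr1 ?expr0.
  by rewrite subrr mul0r.
by rewrite divff // (pnatr_eq0 algC 2).
Qed.

Lemma even_sum N (g : bitstr N -> algC) :
  \sum_q (~~ odd (wt q))%:R * g q = (\sum_q g q + \sum_q (-1) ^+ wt q * g q) / 2.
Proof.
rewrite -big_split mulr_suml; apply: eq_bigr => q _; rewrite even_ind /=; ring.
Qed.

Lemma dotb0 N (q : bitstr N) : dotb q [ffun=> false] = 0%N.
Proof. by rewrite /dotb; apply: eq_card0 => i; rewrite !inE ffunE andbF. Qed.

Lemma sgn_conj n : ((-1 : algC) ^+ n)^* = (-1) ^+ n.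
Proof. by rewrite rmorphXn /= rmorphN1. Qed.

Unset Implicit Arguments.
Theorem lemma1 (N : nat) (hN : (1 <= N)%N) :
  exists (m : nat) (psi : reg N m -> algC) (U : reg N m -> reg N m -> algC)
         (dec : reg N m -> bitstr N),
    normalized psi /\ parity_restricted psi /\ unitary U /\
    forall x : bitstr N, ((wt x).*2 < N)%N ->
      \sum_(o : reg N m | dec o == x) `|apply_op U (IP_query x psi) o| ^+ 2 = 1.
Proof.
pose P : algC := 2 ^+ N.
have P0 : P != 0 by rewrite expf_neq0 // (pnatr_eq0 algC 2).
pose h : algC := sqrtC P^-1.
pose a : algC := sqrtC (2 / P).
have Pge0 : 0 <= P by rewrite exprn_ge0 // ler0n.
have hge0 : 0 <= h by rewrite sqrtC_ge0 invr_ge0.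
have age0 : 0 <= a by rewrite sqrtC_ge0 divr_ge0 // ler0n.
have h2 : h ^+ 2 = P^-1 by rewrite sqrtCK.
have a2 : a ^+ 2 = 2 / P by rewrite sqrtCK.
pose psi0 (q : bitstr N) : algC := if odd (wt q) then 0 else a.
pose decq (q : bitstr N) := if ((wt q).*2 < N)%N then q else compb q.
exists 1%N, (fun t => psi0 t.1), (fun o t => h * (-1) ^+ dotb t.1 o.1),
  (fun t => decq t.1).
pose z : bitstr N := [ffun=> false].
have z0 : compb z != z := compb_neq hN _.
split.
  rewrite /normalized (sum_reg (fun q => `|psi0 q| ^+ 2)).
  transitivity (\sum_q (~~ odd (wt q))%:R * ((-1) ^+ dotb q z * (-1) ^+ dotb q z) * (2 / P)).
    apply: eq_bigr => q _; rewrite dotb0 expr0 mulr1 /psi0.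
    case: (odd _) => /=; first by rewrite normr0 expr0n /= !mul0r.
    by rewrite ger0_norm // a2 !mul1r.
  rewrite -mulr_suml even_sum.
  have := core z z false; rewrite /= (eq_bigr _ (fun q _ => mul1r _)) => ->.
  have := core z z true; rewrite /= => ->.
  rewrite eqxx (negPf z0) mulr0 addr0 mulr1 -/P; field; done.
split.
  by move=> [q w] /=; rewrite /psi0 => ->.
split.
  move=> [a1 w1] [b1 w2] /=; rewrite (ord1 w1) (ord1 w2) xpair_eqE eqxx andbT.
  rewrite (sum_reg (fun q => (h * (-1) ^+ dotb a1 q)^* * (h * (-1) ^+ dotb b1 q))).
  transitivity (h ^+ 2 * \sum_q (if false then (-1) ^+ wt q else 1) * ((-1) ^+ dotb q a1 * (-1) ^+ dotb q b1)).
    rewrite mulr_sumr; apply: eq_bigr => q _.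
    rewrite rmorphM /= geC0_conj // sgn_conj (dotbC a1) (dotbC b1) /=; ring.
  by rewrite (core a1 b1 false) /= h2 mulrA mulVf // mul1r.
move=> x hx.
pose c := h * a * P / 2.
have amp : forall o : reg N 1, apply_op (fun o t => h * (-1) ^+ dotb t.1 o.1)
    (IP_query x (fun t => psi0 t.1)) o
    = c * ((o.1 == x)%:R + (compb o.1 == x)%:R).
  move=> [o w]; rewrite /apply_op /IP_query /=.
  rewrite (sum_reg (fun q => h * (-1) ^+ dotb q o * ((-1) ^+ dotb q x * psi0 q))).
  transitivity (h * a * \sum_q (~~ odd (wt q))%:R * ((-1) ^+ dotb q o * (-1) ^+ dotb q x)).
    rewrite mulr_sumr; apply: eq_bigr => q _; rewrite /psi0.
    by case: (odd (wt q)) => /=; ring.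
  rewrite even_sum.
  have := core o x false; rewrite /= (eq_bigr _ (fun q _ => mul1r _)) => ->.
  rewrite (core o x true) /= /c /P.
  set u := ((o == x)%:R : algC); set v := ((compb o == x)%:R : algC); ring.
have cge0 : 0 <= c by rewrite /c !mulr_ge0 // invr_ge0 ler0n.
have c2 : c ^+ 2 = 1 / 2.
  rewrite /c expr_div_n !exprMn h2 a2 /=; field; done.
rewrite big_mkcond /=.
pose F := fun q => if decq q == x then
   `|c * ((q == x)%:R + (compb q == x)%:R)| ^+ 2 else 0.
transitivity (\sum_(t : reg N 1) F t.1).
  by apply: eq_bigr => t _; rewrite amp.
rewrite (sum_reg F) (bigD1 x) //= (bigD1 (compb x)) /= /F; last by rewrite compb_neq.
have hwc := wt_compb x.
have -> : decq x = x by rewrite /decq hx.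
have -> : decq (compb x) = x.
  rewrite /decq ifF ?compbK //; apply/negbTE; rewrite -leqNgt; lia.
rewrite big1; last first.
  move=> q /andP [qx qcx]; case: ifP => // _.
  rewrite (negbTE qx); have -> : (compb q == x) = false.
    apply/negbTE; apply: contra qcx => /eqP <-; by rewrite compbK.
  by rewrite addr0 mulr0 normr0 expr0n.
rewrite eqxx (negbTE (compb_neq hN x)) compbK eqxx /= addr0 add0r mulr1.
by rewrite ger0_norm // c2; field.
Qed.
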